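(* Let $\mathcal{A}$ be an algebra in a functional language $\mathcal{L}$, $\mathcal{B}$ an $\mathcal{A}$-algebra, and $\Lambda$ a direct system of formulas in $\mathcal{L}_{\mathcal{A}}$ such that every formula of $\Lambda$ is realizable in $\mathcal{B}$. Then the limit algebra $\mathcal{B}_\Lambda=L(\Lambda)$ is an $\mathcal{A}$-algebra, i.e. $\mathcal{B}_\Lambda\models\mathrm{Diag}(\mathcal{A})$.
   Context: Functional language: operation symbols $F$ (arity $n_F$) and constants only. $\mathcal{L}_{\mathcal{A}}=\mathcal{L}\cup\{c_a:a\in A\}$. $\mathrm{Diag}(\mathcal{A})$ is the set of atomic $\mathcal{L}_{\mathcal{A}}$-sentences and negations of atomic $\mathcal{L}_{\mathcal{A}}$-sentences true in $\mathcal{A}$ (with $c_a$ interpreted as $a$); an $\mathcal{A}$-algebra is an $\mathcal{L}_{\mathcal{A}}$-algebra satisfying $\mathrm{Diag}(\mathcal{A})$ (equivalently, $a\mapsto c_a$ is an embedding of $\mathcal{A}$). For a functional language $\mathcal{L}^*$ (here $\mathcal{L}^*=\mathcal{L}_{\mathcal{A}}$): a diagram-formula in a finite reduct $\mathcal{L}'$ in finite variables $X$ is a conjunction of atomic formulas and negations such that $\neg(x=y)$ is a conjunct for distinct $x,y\in X$, for each $F\in\mathcal{L}'$ and $(x_0,\dots,x_{n_F})\in X^{n_F+1}$ exactly one of $F(x_1,\dots,x_{n_F})=x_0$ and its negation is a conjunct, and for each constant $c\in\mathcal{L}'$ and $x\in X$ exactly one of $x=c$, $\neg(x=c)$ is a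 conjunct. A direct system of formulas $\Lambda=(I,\varphi_i,\gamma_{ij})$: $(I,\le)$ directed; $\varphi_i$ consistent diagram-formulas in finite reducts $\mathcal{L}_i\subseteq\mathcal{L}^*$ and finite variables $X_i$; maps $\gamma_{ij}:X_i\to X_j$ ($i\le j$) with $\gamma_{ii}=\mathrm{id}$, $\gamma_{jk}\gamma_{ij}=\gamma_{ik}$, conjuncts of $\varphi_i(\gamma_{ij}(X_i))$ are conjuncts of $\varphi_j$; every constant of $\mathcal{L}^*$ appears in a conjunct $x=c$ of some $\varphi_i$; for every $F,i,(x_1,\dots,x_{n_F})\in X_i^{n_F}$ some $j\ge i$ has a conjunct $F(\gamma_{ij}(x_1),\dots)=x_j$. The limit algebra $L(\Lambda)$ (an $\mathcal{L}^*$-algebra) has universe $\{(x,i):x\in X_i\}/\!\equiv$, $(x,i)\equiv(y,j)$ iff $\gamma_{ik}(x)=\gamma_{jk}(y)$ for some $k\ge i,j$, with constants and operations read off from the conjuncts $x=c$ and $F(\dots)=x_j$. $\varphi_i$ is realizable in $\mathcal{B}$ if it is true under some assignment $X_i\to B$. *)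

(* Defs.v *)
From Stdlib Require Import List ClassicalEpsilon.
From mathcomp Require Import all_boot.

Unset Printing Implicit Defensive.

Record language := Language {
  op  : Type;
  ar  : op -> nat;
  cst : Type
}.

Arguments ar {_} _.

Record algebra (L : language) := Algebra {
  carrier :> Type;
  interp_op  : forall F : op L, ('I_(ar F) -> carrier) -> carrier;
  interp_cst : cst L -> carrier
}.

Arguments carrier {_} _.
Arguments interp_op {_} _ _ _.
Arguments interp_cst {_} _ _.

(* L_A = L together with a new constant c_a for each a in A
   (constants of L_A: inl c = old constant c, inr a = c_a). *)
Definition expand (L : language) (A : algebra L) : language :=
  {| op := op L; ar := @ar L; cst := (cst L + carrier A)%type |}.

Arguments expand {L} A.

Definition diag_alg (L : language) (A : algebra L) : algebra (expand A) :=
  @Algebra (expand A) (carrier A) (@interp_op L A)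
    (fun c : (cst L + carrier A)%type =>
       match c with inl c0 => interp_cst A c0 | inr a => a end).

Inductive term (L : language) (V : Type) : Type :=
| tVar : V -> term L V
| tCst : cst L -> term L V
| tApp : forall F : op L, ('I_(ar F) -> term L V) -> term L V.

Arguments tVar {L V} _.
Arguments tCst {L V} _.
Arguments tApp {L V} _ _.

Arguments diag_alg {L} A.

Fixpoint eval (L : language) (M : algebra L) (V : Type) (s : V -> M)
  (t : term L V) : M :=
  match t with
  | tVar v => s v
  | tCst c => interp_cst M c
  | tApp F ts => interp_op M F (fun k => @eval L M V s (ts k))
  end.

Arguments eval {L} M {V} s t.

Fixpoint rename (L : language) (V W : Type) (f : V -> W) (t : term L V)
  : term L W :=
  match t with
  | tVar v => tVar (f v)
  | tCst c => tCst c
  | tApp F ts => tApp F (fun k => rename L V W f (ts k))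
  end.

(* A literal: an atomic formula (lhs = rhs) if pos = true,
   its negation ~(lhs = rhs) if pos = false. *)
Record literal (L : language) (V : Type) := Lit {
  pos : bool; lhs : term L V; rhs : term L V }.

Arguments Lit {L V} _ _ _.

Arguments rename {L V W} f t.
Arguments Lit {L V} _ _ _.
Arguments pos {_ _} _.
Arguments lhs {_ _} _.
Arguments rhs {_ _} _.

Definition sat_lit (L : language) (M : algebra L) (V : Type) (s : V -> M)
  (l : literal L V) : Prop :=
  if pos l then eval M s (lhs l) = eval M s (rhs l)
  else eval M s (lhs l) <> eval M s (rhs l).

Arguments sat_lit {L} M {V} s l.

Definition rename_lit (L : language) (V W : Type) (f : V -> W)
  (l : literal L V) : literal L W :=
  Lit (pos l) (rename f (lhs l)) (rename f (rhs l)).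

Arguments rename_lit {L V W} f l.

(* A conjunction of literals is represented by the list of its conjuncts. *)
Definition conj_formula (L : language) (V : Type) := list (literal L V).

Arguments conj_formula : clear implicits.

Definition sat_formula (L : language) (M : algebra L) (V : Type) (s : V -> M)
  (phi : conj_formula L V) : Prop :=
  forall l, In l phi -> sat_lit M s l.

Arguments sat_formula {L} M {V} s phi.

Definition no_var (T : Type) (e : Empty_set) : T := match e with end.

Definition sentence_true (L : language) (M : algebra L)
  (l : literal L Empty_set) : Prop := sat_lit M (@no_var M) l.

(* M |= Diag(A): every atomic L_A-sentence true in A, and every negation of
   an atomic L_A-sentence true in A, is true in M. *)
Arguments sentence_true {L} M l.

Definition is_A_algebra (L : language) (A : algebra L)
  (M : algebra (expand A)) : Prop :=
  forall l : literal (expand A) Empty_set,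
    sentence_true (diag_alg A) l -> sentence_true M l.

Record reduct (L : language) := Reduct {
  r_op : op L -> Prop; r_cst : cst L -> Prop }.

Arguments r_op {_} _ _.
Arguments r_cst {_} _ _.

Definition finite_pred (T : Type) (P : T -> Prop) : Prop :=
  exists s : list T, forall x, P x -> In x s.

Arguments finite_pred {T} P.

Definition finite_reduct (L : language) (R : reduct L) : Prop :=
  finite_pred (r_op R) /\ finite_pred (r_cst R).

Arguments finite_reduct {L} R.

Fixpoint term_in (L : language) (R : reduct L) (V : Type) (t : term L V)
  : Prop :=
  match t with
  | tVar _ => True
  | tCst c => r_cst R c
  | tApp F ts => r_op R F /\ forall k, term_in L R V (ts k)
  end.

Definition xorP (P Q : Prop) : Prop := (P /\ ~ Q) \/ (~ P /\ Q).

Arguments term_in {L} R {V} t.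

Definition diagram_formula (L : language) (R : reduct L) (X : finType)
  (phi : conj_formula L X) : Prop :=
  [/\ finite_reduct R,
      (forall l, In l phi -> term_in R (lhs l) /\ term_in R (rhs l)),
      (forall x y : X, x <> y -> In (Lit false (tVar x) (tVar y)) phi),
      (forall F : op L, r_op R F ->
         forall (x0 : X) (xs : 'I_(ar F) -> X),
           xorP (In (Lit true (tApp F (fun k => tVar (xs k))) (tVar x0)) phi)
                (In (Lit false (tApp F (fun k => tVar (xs k))) (tVar x0)) phi))
    & (forall c : cst L, r_cst R c -> forall x : X,
           xorP (In (Lit true (tVar x) (tCst c)) phi)
                (In (Lit false (tVar x) (tCst c)) phi))].

Arguments diagram_formula {L} R {X} phi.

Definition consistent (L : language) (V : Type) (phi : conj_formula L V)
  : Prop :=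
  exists (M : algebra L) (s : V -> M), sat_formula M s phi.

Arguments consistent {L V} phi.

Definition realizable (L : language) (M : algebra L) (V : Type)
  (phi : conj_formula L V) : Prop :=
  exists s : V -> M, sat_formula M s phi.

Arguments realizable {L} M {V} phi.

(* The maps gamma i j are given for all i j, but only used for i <= j.    *)
Record dsystem (L : language) := DSystem {
  ds_I : Type;
  ds_le : ds_I -> ds_I -> Prop;
  ds_X : ds_I -> finType;
  ds_R : ds_I -> reduct L;
  ds_phi : forall i, conj_formula L (ds_X i);
  ds_gamma : forall i j, ds_X i -> ds_X j
}.

Arguments ds_I {_} _.
Arguments ds_le {_} _ _ _.
Arguments ds_X {_} _ _.
Arguments ds_R {_} _ _.
Arguments ds_phi {_} _ _.
Arguments ds_gamma {_} _ _ _ _.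

Definition is_direct_system (L : language) (D : dsystem L) : Prop :=
  let le := ds_le D in
  let X := ds_X D in
  let phi := ds_phi D in
  let g := ds_gamma D in
  (forall i, le i i) /\
      (forall i j k, le i j -> le j k -> le i k) /\
      (forall i j, exists k, le i k /\ le j k) /\
      (forall i, diagram_formula (ds_R D i) (phi i) /\ consistent (phi i)) /\
      (forall i (x : X i), g i i x = x) /\
      (forall i j k, le i j -> le j k -> forall x : X i,
          g j k (g i j x) = g i k x) /\
      (forall i j, le i j -> forall l, In l (phi i) ->
          In (rename_lit (g i j) l) (phi j)) /\
      (forall c : cst L, exists i (x : X i), In (Lit true (tVar x) (tCst c)) (phi i)) /\
    (forall (F : op L) i (xs : 'I_(ar F) -> X i), exists j, le i j /\
          exists xj : X j,
            In (Lit true (tApp F (fun k => tVar (g i j (xs k)))) (tVar xj)) (phi j)).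

Section Limit.
Variables (L : language) (D : dsystem L).

Definition lim_pt := {i : ds_I D & ds_X D i}.

Definition lim_equiv (u v : lim_pt) : Prop :=
  exists k, [/\ ds_le D (projT1 u) k, ds_le D (projT1 v) k &
                ds_gamma D (projT1 u) k (projT2 u) = ds_gamma D (projT1 v) k (projT2 v)].

Definition lim_carrier : Type :=
  {P : lim_pt -> Prop | exists u, P = lim_equiv u}.

Definition lim_cls (u : lim_pt) : lim_carrier :=
  exist _ (lim_equiv u) (ex_intro _ u erefl).

Variable hQ : inhabited lim_carrier.

Definition lim_cst (c : cst L) : lim_carrier :=
  epsilon hQ (fun q => exists i (x : ds_X D i),
     In (Lit true (tVar x) (tCst c)) (ds_phi D i) /\ q = lim_cls (existT _ i x)).

Definition lim_op (F : op L) (qs : 'I_(ar F) -> lim_carrier) : lim_carrier :=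
  epsilon hQ (fun q => exists (idx : 'I_(ar F) -> ds_I D)
       (xs : forall k, ds_X D (idx k)) (j : ds_I D) (x0 : ds_X D j),
     [/\ (forall k, qs k = lim_cls (existT _ (idx k) (xs k))),
         (forall k, ds_le D (idx k) j),
         In (Lit true (tApp F (fun k => tVar (ds_gamma D (idx k) j (xs k))))
                      (tVar x0)) (ds_phi D j)
       & q = lim_cls (existT _ j x0)]).

Definition limit_algebra : algebra L :=
  {| carrier := lim_carrier; interp_op := lim_op; interp_cst := lim_cst |}.

End Limit.

Arguments lim_pt {L} D.
Arguments lim_equiv {L} D u v.
Arguments lim_carrier {L} D.
Arguments lim_cls {L} D u.
Arguments lim_cst {L} D hQ c.
Arguments lim_op {L} D hQ F qs.
Arguments limit_algebra {L} D hQ.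
Arguments is_A_algebra {L} A M.
Arguments is_direct_system {L} D.

(* Main.v *)
Require Import Defs.
From Stdlib Require Import List ClassicalEpsilon FunctionalExtensionality PropExtensionality ProofIrrelevance Classical.
From mathcomp Require Import all_boot.

Inductive Comp (L : language) (D : dsystem L) (i : ds_I D)
  : term L Empty_set -> ds_X D i -> Prop :=
| CompC c x : In (Lit true (tVar x) (tCst c)) (ds_phi D i) -> Comp L D i (tCst c) x
| CompA F ts xs x : (forall k, Comp L D i (ts k) (xs k)) ->
    In (Lit true (tApp F (fun k => tVar (xs k))) (tVar x)) (ds_phi D i) ->
    Comp L D i (tApp F ts) x.

Lemma comp_mono L (D : dsystem L) (HD : is_direct_system D) i j :
  ds_le D i j -> forall t x, Comp L D i t x -> Comp L D j t (ds_gamma D i j x).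
Proof.
move: HD => [Hrefl [Htrans [Hdir [Hdiag [Hid [Hcomp [Hren [Hcst Hop]]]]]]]] Hij.
move=> t x; elim => [c y Hin | F ts xs y _ IH Hin].
- apply: CompC. exact: (Hren _ _ Hij _ Hin).
- apply: (CompA _ _ _ F ts (fun k => ds_gamma D i j (xs k))) => //.
  exact: (Hren _ _ Hij _ Hin).
Qed.

Lemma comp_eval L (D : dsystem L) (M : algebra L) i (s : ds_X D i -> M) :
  sat_formula M s (ds_phi D i) ->
  forall t x, Comp L D i t x -> eval M (@no_var M) t = s x.
Proof.
move=> Hs t x; elim => [c y Hin | F ts xs y _ IH Hin].
- have := Hs _ Hin. rewrite /sat_lit /=. by move=> ->.
- have := Hs _ Hin. rewrite /sat_lit /= => <-.
  congr (interp_op M F). apply: functional_extensionality => k. exact: IH.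
Qed.

Lemma upper L (D : dsystem L) (HD : is_direct_system D) (i0 : ds_I D) :
  forall n (f : 'I_n -> ds_I D), exists j, forall k, ds_le D (f k) j.
Proof.
move: HD => [Hrefl [Htrans [Hdir _]]].
elim => [|n IH] f.
- by exists i0 => [[k Hk]].
- have [j1 Hj1] := IH (fun k => f (lift ord0 k)).
  have [j [H1 H2]] := Hdir j1 (f ord0).
  exists j => k. case: (unliftP ord0 k) => [k' ->|->] //.
  exact: Htrans (Hj1 k') H1.
Qed.

Lemma equiv_trans L (D : dsystem L) (HD : is_direct_system D) u v w :
  lim_equiv D u v -> lim_equiv D v w -> lim_equiv D u w.
Proof.
move: HD => [Hrefl [Htrans [Hdir [Hdiag [Hid [Hcomp _]]]]]].
move=> [k1 [Hu1 Hv1 E1]] [k2 [Hv2 Hw2 E2]].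
have [k [H1 H2]] := Hdir k1 k2.
exists k; split; [exact: Htrans Hu1 H1 | exact: Htrans Hw2 H2|].
by rewrite -(Hcomp _ _ _ Hu1 H1) E1 (Hcomp _ _ _ Hv1 H1) -(Hcomp _ _ _ Hv2 H2) E2
   (Hcomp _ _ _ Hw2 H2).
Qed.

Lemma equiv_sym L (D : dsystem L) u v : lim_equiv D u v -> lim_equiv D v u.
Proof. by move=> [k [H1 H2 E]]; exists k; split. Qed.

Lemma equiv_refl L (D : dsystem L) (HD : is_direct_system D) u : lim_equiv D u u.
Proof. move: HD => [Hrefl _]. by exists (projT1 u); split. Qed.

Lemma cls_eq L (D : dsystem L) (HD : is_direct_system D) u v :
  lim_equiv D u v -> lim_cls D u = lim_cls D v.
Proof.
move=> H. apply: eq_sig_hprop => [x p q|]; first exact: proof_irrelevance.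
rewrite /=. apply: functional_extensionality => w.
apply: propositional_extensionality; split => Hw.
- exact: (equiv_trans _ _ HD _ _ _ (equiv_sym _ _ _ _ H) Hw).
- exact: (equiv_trans _ _ HD _ _ _ H Hw).
Qed.

Lemma cls_inv L (D : dsystem L) (HD : is_direct_system D) u v :
  lim_cls D u = lim_cls D v -> lim_equiv D u v.
Proof.
move=> /(f_equal (@proj1_sig _ _)) /= E.
rewrite E. exact: equiv_refl.
Qed.

Lemma cls_step L (D : dsystem L) (HD : is_direct_system D) i j x :
  ds_le D i j -> lim_cls D (existT _ i x) = lim_cls D (existT _ j (ds_gamma D i j x)).
Proof.
move=> Hij; apply: cls_eq => //.
move: HD => [Hrefl [Htrans [Hdir [Hdiag [Hid _]]]]].
exists j; split => //=; by rewrite Hid.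
Qed.

Lemma sigT_eta' (A : Type) (P : A -> Type) (p : {a : A & P a}) :
  existT P (projT1 p) (projT2 p) = p.
Proof. by case: p. Qed.

Lemma eval_comp L (D : dsystem L) (HD : is_direct_system D)
  (hQ : inhabited (lim_carrier D)) (t : term L Empty_set) :
  exists p : lim_pt D, Comp L D (projT1 p) t (projT2 p) /\
    eval (limit_algebra D hQ) (@no_var _) t = lim_cls D p.
Proof.
have HD' := HD.
move: HD' => [Hrefl [Htrans [Hdir [Hdiag [Hid [Hcomp [Hren [Hcst Hop]]]]]]]].
have [i0] : inhabited (ds_I D).
  by case: hQ => [[P [u _]]]; constructor; exact: projT1 u.
elim: t => [v|c|F ts IH]; first by case: v.
- have [i [x Hin]] := Hcst c.
  set P := (fun q => exists i (x : ds_X D i),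
     In (Lit true (tVar x) (tCst c)) (ds_phi D i) /\ q = lim_cls D (existT _ i x)).
  have := epsilon_spec hQ P (ex_intro _ _ (ex_intro _ i (ex_intro _ x (conj Hin erefl)))).
  move=> [i' [x' [Hin' E]]].
  exists (existT _ i' x'); split; first exact: CompC.
  exact: E.
- pose IH' := fun k => constructive_indefinite_description _ (IH k).
  pose f := fun k => proj1_sig (IH' k).
  have Hf : forall k, Comp L D (projT1 (f k)) (ts k) (projT2 (f k)) /\
    eval (limit_algebra D hQ) (@no_var _) (ts k) = lim_cls D (f k).
    move=> k; exact: (proj2_sig (IH' k)).
  have [j0 Hj0] := upper L D HD i0 _ (fun k => projT1 (f k)).
  have [j [Hj [xj Hin]]] := Hop F j0 (fun k => ds_gamma D (projT1 (f k)) j0 (projT2 (f k))).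
  have Efun : (fun k => tVar (ds_gamma D j0 j (ds_gamma D (projT1 (f k)) j0 (projT2 (f k)))))
     = (fun k => @tVar L (ds_X D j) (ds_gamma D (projT1 (f k)) j (projT2 (f k)))).
    apply: functional_extensionality => k. by rewrite Hcomp.
  rewrite Efun in Hin.
  rewrite /= /lim_op.
  set P := (fun q => exists (idx : 'I_(ar F) -> ds_I D)
       (xs : forall k, ds_X D (idx k)) (j : ds_I D) (x0 : ds_X D j),
     [/\ (forall k, _ = lim_cls D (existT _ (idx k) (xs k))),
         (forall k, ds_le D (idx k) j),
         In (Lit true (tApp F (fun k => tVar (ds_gamma D (idx k) j (xs k))))
                      (tVar x0)) (ds_phi D j)
       & q = lim_cls D (existT _ j x0)]).
  have HP : exists q, P q.
    exists (lim_cls D (existT _ j xj)).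
    exists (fun k => projT1 (f k)), (fun k => projT2 (f k)), j, xj; split => //.
    + move=> k. rewrite sigT_eta'. exact: (proj2 (Hf k)).
    + move=> k. exact: Htrans (Hj0 k) Hj.
  have := epsilon_spec hQ P HP.
  move=> [idx [xs [j' [x0 [H1 H2 H3 H4]]]]].
  have Hm : forall k, exists m, [/\ ds_le D (idx k) m, ds_le D (projT1 (f k)) m &
      ds_gamma D (idx k) m (xs k) = ds_gamma D (projT1 (f k)) m (projT2 (f k))].
    move=> k. apply: (cls_inv _ _ HD (existT _ (idx k) (xs k)) (f k)). rewrite -H1. exact: (proj2 (Hf k)).
  pose m := fun k => proj1_sig (constructive_indefinite_description _ (Hm k)).
  have Hm' : forall k, [/\ ds_le D (idx k) (m k), ds_le D (projT1 (f k)) (m k) &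
      ds_gamma D (idx k) (m k) (xs k) = ds_gamma D (projT1 (f k)) (m k) (projT2 (f k))].
    move=> k; exact: (proj2_sig (constructive_indefinite_description _ (Hm k))).
  have [j1 Hj1] := upper L D HD i0 _ m.
  have [j'' [Hj1'' Hj'']] := Hdir j1 j'.
  exists (existT _ j'' (ds_gamma D j' j'' x0)); split.
  + apply: (CompA _ _ _ F ts (fun k => ds_gamma D j' j'' (ds_gamma D (idx k) j' (xs k)))).
    * move=> k. have [Ha Hb Hc] := Hm' k.
      have Hmk : ds_le D (m k) j'' := Htrans _ _ _ (Hj1 k) Hj1''.
      have -> : ds_gamma D j' j'' (ds_gamma D (idx k) j' (xs k)) =
                ds_gamma D (projT1 (f k)) j'' (projT2 (f k)).
        rewrite (Hcomp _ _ _ (H2 k) Hj'') -(Hcomp _ _ _ Ha Hmk) Hc.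
        by rewrite (Hcomp _ _ _ Hb Hmk).
      apply: comp_mono => //. exact: Htrans Hb Hmk.
      exact: (proj1 (Hf k)).
    * exact: (Hren _ _ Hj'' _ H3).
  + rewrite H4. exact: cls_step.
Qed.

Theorem mainTheorem14 (L : language) (A : algebra L) (B : algebra (expand A))
  (D : dsystem (expand A)) (hQ : inhabited (lim_carrier D)) :
  is_A_algebra A B ->
  is_direct_system D ->
  (forall i, realizable B (ds_phi D i)) ->
  is_A_algebra A (limit_algebra D hQ).
Proof.
move=> HB HD Hreal [b t1 t2] Hl.
have HD' := HD.
move: HD' => [Hrefl [Htrans [Hdir [Hdiag [Hid [Hcomp [Hren [Hcst Hop]]]]]]]].
have HBl := HB _ Hl. move: HBl; rewrite /sentence_true /sat_lit /= => HBl.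
have [p1 [C1 E1]] := eval_comp _ D HD hQ t1.
have [p2 [C2 E2]] := eval_comp _ D HD hQ t2.
have [k [Hk1 Hk2]] := Hdir (projT1 p1) (projT1 p2).
have C1' := comp_mono _ D HD _ _ Hk1 _ _ C1.
have C2' := comp_mono _ D HD _ _ Hk2 _ _ C2.
have Ep1 : lim_cls D p1 = lim_cls D (existT _ k (ds_gamma D (projT1 p1) k (projT2 p1))).
  by rewrite -[in LHS](sigT_eta' _ _ p1); apply: cls_step.
have Ep2 : lim_cls D p2 = lim_cls D (existT _ k (ds_gamma D (projT1 p2) k (projT2 p2))).
  by rewrite -[in LHS](sigT_eta' _ _ p2); apply: cls_step.
rewrite /sentence_true /sat_lit /= E1 E2 Ep1 Ep2.
set y1 := ds_gamma D (projT1 p1) k (projT2 p1) in C1' *.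
set y2 := ds_gamma D (projT1 p2) k (projT2 p2) in C2' *.
clear Hl; case: b HBl => /= HBl.
- have [s Hs] := Hreal k.
  have e1 := comp_eval _ D B k s Hs _ _ C1'.
  have e2 := comp_eval _ D B k s Hs _ _ C2'.
  case: (classic (y1 = y2)) => [E|Hne]; first by rewrite E.
  case: (Hdiag k) => [[_ _ Hd _ _] _].
  have := Hs _ (Hd _ _ Hne). rewrite /sat_lit /=.
  by rewrite -e1 -e2.
- move=> /(cls_inv _ D HD) [m [Hkm _ Em]].
  move: Em => /= Em.
  have D1 := comp_mono _ D HD _ _ Hkm _ _ C1'.
  have D2 := comp_mono _ D HD _ _ Hkm _ _ C2'.
  have [s Hs] := Hreal m.
  apply: HBl.
  by rewrite (comp_eval _ D B m s Hs _ _ D1) (comp_eval _ D B m s Hs _ _ D2) Em.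
Qed.
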